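(* Under the rank assumptions stated in the context, let $S_{jk}:=\{y+s v_j+t v_k: y\in \mathrm{relint}(F_{jk}), s> 0, t> 0\}$ for $1\leq j< k\leq d$ such that $F_{jk}$ is a facet of $F_j$. Then $S_{jk}\cap S_{j'k'}=\emptyset$ for any $\{ j,k \}\neq \{ j',k' \}$.
   Context: Let $d\geq 3$, let $v_1,\dots,v_d\in\mathbb{R}^d$ be distinct unit vectors and $b_1,\dots,b_d$ real numbers, and let $A=\{x\in \mathbb{R}^d:\ x\cdot v_j\leq b_j\ \text{for}\ j=1,\dots, d\}$ be a (possibly unbounded) convex polytope. For each $j$, $F_j$ denotes the (possible) facet of $A$ corresponding to $v_j$ (the part of $A$ on the hyperplane $\{x: x\cdot v_j=b_j\}$), and $F_{jk}=F_{kj}$ denotes the facet of the $(d-1)$-dimensional polytope $F_j$ created by intersecting with $F_k$, $k\neq j$; $\mathrm{relint}$ denotes relative interior. The following rank assumptions are imposed: for any $1\leq j<k\leq d$, if $\operatorname{rank} \begin{bmatrix} v_j & v_k \end{bmatrix}<2$, then $\operatorname{rank} \begin{bmatrix} v_j & v_k\end{bmatrix}<\operatorname{rank} \begin{bmatrix} v_j & v_k\\ b_j&b_k \end{bmatrix}$; for any $1\leq j<k<l\leq d$, if $\operatorname{rank} \begin{bmatrix} v_j & v_k & v_l\end{bmatrix}<3$, then $\operatorname{rank} \begin{bmatrix} v_j & v_k & v_l\end{bmatrix}<\operatorname{rank} \begin{bmatrix} v_j & v_k & v_l\\ b_j&b_k&b_l \end{bmatrix}$; for any $1\leq j<k<l<s\leq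 d$, if $\operatorname{rank} \begin{bmatrix} v_j & v_k & v_l& v_s\end{bmatrix}<4$, then $\operatorname{rank} \begin{bmatrix} v_j & v_k & v_l& v_s\end{bmatrix}<\operatorname{rank} \begin{bmatrix} v_j & v_k & v_l& v_s\\ b_j&b_k&b_l&b_s \end{bmatrix}$. *)

(* Defs.v *)
From HB Require Import structures.
From mathcomp Require Import all_boot all_order all_algebra.
From mathcomp Require Import reals.
Set Implicit Arguments. Unset Strict Implicit. Unset Printing Implicit Defensive.
Import Order.TTheory GRing.Theory Num.Theory.
Local Open Scope ring_scope.

Section Defs.
Variables (R : realType) (d : nat).
Notation vec := 'rV[R]_d.

Definition dotv (x y : vec) : R := (x *m y^T) 0 0.

Definition aff_hull (C : vec -> Prop) (y : vec) : Prop :=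
  exists (n : nat) (p : 'I_n -> vec) (w : 'I_n -> R),
    (forall i, C (p i)) /\ \sum_(i < n) w i = 1 /\ y = \sum_(i < n) w i *: p i.

Definition relint (C : vec -> Prop) (x : vec) : Prop :=
  C x /\ exists eps : R, 0 < eps /\
    forall y, aff_hull C y -> dotv (y - x) (y - x) < eps ^+ 2 -> C y.

Definition aff_indep (n : nat) (p : 'I_n.+1 -> vec) : bool :=
  row_free (\matrix_(i < n) (p (lift ord0 i) - p ord0)).

Definition has_affdim (C : vec -> Prop) (n : nat) : Prop :=
  (exists p : 'I_n.+1 -> vec, (forall i, C (p i)) /\ aff_indep p) /\
  ~ (exists p : 'I_n.+2 -> vec, (forall i, C (p i)) /\ aff_indep p).

Definition is_facet_of (G C : vec -> Prop) : Prop :=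
  (exists (w : vec) (c : R), (forall x, C x -> dotv x w <= c) /\
      (forall x, G x <-> (C x /\ dotv x w = c))) /\
  exists n : nat, has_affdim C n.+1 /\ has_affdim G n.

Variables (v : 'I_d -> vec) (b : 'I_d -> R).

Definition polyA (x : vec) : Prop := forall j, dotv x (v j) <= b j.
Definition Fac (j : 'I_d) (x : vec) : Prop := polyA x /\ dotv x (v j) = b j.
Definition Fac2 (j k : 'I_d) (x : vec) : Prop := Fac j x /\ Fac k x.

(* Rank assumption for m-element index sets j_1 < ... < j_m:
   rank [v_j1 ... v_jm] < m  ->  rank [v..] < rank [v..; b..].
   Matrices are written with rows v_ji (rank is transpose-invariant). *)
Definition rank_cond (m : nat) : Prop :=
  forall f : 'I_m -> 'I_d, (forall i i' : 'I_m, (i < i')%N -> (f i < f i')%N) ->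
    let M := \matrix_(i < m) v (f i) in
    let Maug := \matrix_(i < m) row_mx (v (f i)) (b (f i))%:M in
    (\rank M < m)%N -> (\rank M < \rank Maug)%N.

Definition Sset (j k : 'I_d) (z : vec) : Prop :=
  exists (y : vec) (s t : R), relint (Fac2 j k) y /\ 0 < s /\ 0 < t /\
    z = y + s *: v j + t *: v k.

End Defs.

(* Main.v *)
Require Import Defs.
From HB Require Import structures.
From mathcomp Require Import all_boot all_order all_algebra.
From mathcomp Require Import reals.
From mathcomp Require Import ring lra zify.
Import Order.TTheory GRing.Theory Num.Theory.
Local Open Scope ring_scope.
Set Implicit Arguments. Unset Strict Implicit.

Section H.
Variables (R : realType) (d : nat).
Implicit Types x y z : 'rV[R]_d.

Lemma dotvE x y : dotv x y = \sum_c x 0 c * y 0 c.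
Proof. by rewrite /dotv !mxE; apply: eq_bigr => c _; rewrite mxE. Qed.

Lemma dotvC x y : dotv x y = dotv y x.
Proof. by rewrite !dotvE; apply: eq_bigr => c _; rewrite mulrC. Qed.

Lemma dotvDl x y z : dotv (x + y) z = dotv x z + dotv y z.
Proof. by rewrite !dotvE -big_split; apply: eq_bigr => c _; rewrite mxE mulrDl. Qed.

Lemma dotvZl a x y : dotv (a *: x) y = a * dotv x y.
Proof. by rewrite !dotvE mulr_sumr; apply: eq_bigr => c _; rewrite mxE mulrA. Qed.

Lemma dotvNl x y : dotv (- x) y = - dotv x y.
Proof. by rewrite -scaleN1r dotvZl mulN1r. Qed.

Lemma dotvBl x y z : dotv (x - y) z = dotv x z - dotv y z.
Proof. by rewrite dotvDl dotvNl. Qed.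

Lemma dotvDr x y z : dotv z (x + y) = dotv z x + dotv z y.
Proof. by rewrite dotvC dotvDl !(dotvC z). Qed.
Lemma dotvZr a x y : dotv y (a *: x) = a * dotv y x.
Proof. by rewrite dotvC dotvZl dotvC. Qed.
Lemma dotvBr x y z : dotv z (x - y) = dotv z x - dotv z y.
Proof. by rewrite dotvC dotvBl !(dotvC z). Qed.

Lemma dotv_ge0 x : 0 <= dotv x x.
Proof. by rewrite dotvE; apply: sumr_ge0 => c _; rewrite -expr2 sqr_ge0. Qed.

Lemma dotv_eq0 x : dotv x x = 0 -> x = 0.
Proof.
rewrite dotvE => /eqP; rewrite psumr_eq0 => [/allP H|c _]; last by rewrite -expr2 sqr_ge0.
apply/rowP => c; rewrite mxE; have := H c (mem_index_enum c).
by rewrite -expr2 sqrf_eq0 => /eqP.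
Qed.

Variables (v : 'I_d -> 'rV[R]_d) (b : 'I_d -> R).

Lemma proj_eq j k j' k' y y' s t s' t' :
  Fac2 v b j k y -> Fac2 v b j' k' y' -> 0 <= s -> 0 <= t -> 0 <= s' -> 0 <= t' ->
  y + s *: v j + t *: v k = y' + s' *: v j' + t' *: v k' -> y = y'.
Proof.
move=> [[Ay Hj] [_ Hk]] [[Ay' Hj'] [_ Hk']] s0 t0 s0' t0' E.
have Ew : y' - y = (s *: v j + t *: v k) - (s' *: v j' + t' *: v k').
  have -> : y' = y + s *: v j + t *: v k - (s' *: v j' + t' *: v k').
    by rewrite E -(addrA y') addrK.
  by rewrite [LHS]addrC !addrA addNr add0r.
have h1 : dotv (y' - y) (s *: v j + t *: v k) <= 0.
  rewrite dotvDr !dotvZr !dotvBl Hj Hk.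
  have := Ay' j; have := Ay' k; nra.
have h2 : 0 <= dotv (y' - y) (s' *: v j' + t' *: v k').
  rewrite dotvDr !dotvZr !dotvBl Hj' Hk'.
  have := Ay j'; have := Ay k'; nra.
have : dotv (y' - y) (y' - y) <= 0.
  by rewrite {2}Ew dotvBr; lra.
move=> h; have h0 := dotv_ge0 (y' - y).
have /dotv_eq0 /eqP : dotv (y' - y) (y' - y) = 0 by lra.
by rewrite subr_eq0 => /eqP.
Qed.

Lemma relint_face j k l y :
  relint (Fac2 v b j k) y -> dotv y (v l) = b l ->
  forall p, Fac2 v b j k p -> dotv p (v l) = b l.
Proof.
move=> [Fy [eps [eps0 Heps]]] Hl p Fp.
have pl : dotv p (v l) <= b l by case: Fp => [[Ap _] _]; exact: Ap.
apply/eqP; rewrite eq_le pl /=; rewrite leNgt; apply/negP => plt.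
set N := dotv (y - p) (y - p).
have N0 : 0 <= N := dotv_ge0 _.
set e := eps / (N + 1).
have e0 : 0 < e by rewrite divr_gt0 // ltr_wpDl.
have ee : e * (N + 1) = eps by rewrite /e mulfVK // gt_eqF // ltr_wpDl.
set q := y + e *: (y - p).
have Fq : Fac2 v b j k q.
  apply: Heps.
    exists 2%N, (fun i : 'I_2 => if val i == 0%N then y else p),
      (fun i : 'I_2 => if val i == 0%N then 1 + e else - e).
    split; first by case=> [[|[|]]] //= _; case: Fy.
    rewrite !big_ord_recl !big_ord0 /=; split; first by rewrite addr0; lra.
    rewrite /q addr0 scalerDl scale1r scalerBr scaleNr -addrA; congr (_ + _).
  have -> : q - y = e *: (y - p) by rewrite /q [y + _]addrC addrK.
  rewrite dotvZl dotvZr -/N.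
  have : N < (N + 1) ^+ 2 by nra.
  move=> h; rewrite -ee; nra.
have : dotv q (v l) <= b l by case: Fq => [[Aq _] _]; exact: Aq.
rewrite /q dotvDl dotvZl dotvBl Hl; nra.
Qed.

Lemma rank3 (f : 'I_3 -> 'I_d) y n (D : 'M[R]_(n, d)) :
  rank_cond v b 3 -> (forall i i' : 'I_3, (i < i')%N -> (f i < f i')%N) ->
  (forall i, dotv y (v (f i)) = b (f i)) -> row_free D ->
  (forall r i, dotv (row r D) (v (f i)) = 0) -> (n + 3 <= d)%N.
Proof.
move=> rc fs Hy fD HD.
have := rc f fs; rewrite /= => H3.
set M := \matrix_(i < 3) v (f i).
have EM : \matrix_(i < 3) row_mx (v (f i)) (b (f i))%:M = M *m row_mx 1%:M y^T.
  rewrite mul_mx_row mulmx1; apply/matrixP => i c; rewrite mxE.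
  rewrite -(splitK c); case: (split c) => k /=; rewrite ?row_mxEl ?row_mxEr !mxE ?row_mxEl ?row_mxEr //.
  rewrite (ord1 k) eqxx mulr1n -Hy dotvC dotvE.
  by apply: eq_bigr => c' _; rewrite !mxE.
have rM : \rank M = 3%N.
  apply/eqP; rewrite eqn_leq rank_leq_row /= leqNgt; apply/negP => /H3.
  by rewrite EM ltnNge mxrankM_maxl.
have DM : D *m M^T = 0.
  apply/matrixP => r i; rewrite [RHS]mxE -(HD r i) mxE dotvE.
  by apply: eq_bigr => c _; rewrite !mxE.
have := mxrank_mul_min D M^T; rewrite DM mxrank0 mxrank_tr rM.
by move: fD; rewrite /row_free => /eqP ->; rewrite leqn0 subn_eq0.
Qed.

Lemma row_free_mul m1 m2 n1 (S : 'M[R]_(m1, m2)) (P : 'M[R]_(m2, n1)) :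
  row_free S -> row_free P -> row_free (S *m P).
Proof.
move=> /row_freeP [B1 h1] /row_freeP [B2 h2]; apply/row_freeP.
by exists (B2 *m B1); rewrite mulmxA -(mulmxA S) h2 mulmx1 h1.
Qed.

Lemma row_free_sel m1 m2 (f : 'I_m1 -> 'I_m2) : injective f ->
  row_free (rowsub f (1%:M : 'M[R]_m2)).
Proof.
move=> fi; apply/row_freeP; exists (rowsub f (1%:M : 'M[R]_m2))^T.
rewrite mul_rowsub_mx mul1mx; apply/matrixP => i i'; rewrite !mxE (inj_eq fi).
by rewrite eq_sym.
Qed.

Lemma affdim_sub (C : 'rV[R]_d -> Prop) m n :
  (exists p : 'I_m.+1 -> 'rV[R]_d, (forall i, C (p i)) /\ aff_indep p) -> (n <= m)%N ->
  exists q : 'I_n.+1 -> 'rV[R]_d, (forall i, C (q i)) /\ aff_indep q.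
Proof.
move=> [p [Cp ip]] nm.
have nm1 : (n.+1 <= m.+1)%N by [].
exists (fun i => p (widen_ord nm1 i)); split => [i|]; first exact: Cp.
rewrite /aff_indep [X in row_free X](_ : _ = rowsub (widen_ord nm) (\matrix_(i < m) (p (lift ord0 i) - p ord0))); last first.
  apply/matrixP => i c; rewrite !mxE.
  have -> : widen_ord nm1 (lift ord0 i) = lift ord0 (widen_ord nm i) by apply: val_inj.
  by have -> : widen_ord nm1 ord0 = ord0 by apply: val_inj.
rewrite rowsubE; apply: row_free_mul => //; apply: row_free_sel.
by move=> x y /(congr1 val) /= /val_inj.
Qed.

Definition mk3 (a c e : 'I_d) (i : 'I_3) : 'I_d :=
  if val i == 0%N then a else if val i == 1%N then c else e.

Lemma mk3_sorted (a c e : 'I_d) : (a < c)%N -> (c < e)%N ->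
  forall i i' : 'I_3, (i < i')%N -> (mk3 a c e i < mk3 a c e i')%N.
Proof.
move=> h1 h2 [[|[|[|?]]] ?] [[|[|[|?]]] ?] //= _; rewrite /mk3 /=; exact: ltn_trans h1 h2.
Qed.

Lemma mk3P (P : 'I_d -> Prop) a c e : P a -> P c -> P e -> forall i, P (mk3 a c e i).
Proof. by move=> pa pc pe i; rewrite /mk3; case: ifP => _ //; case: ifP. Qed.

Lemma sort3 (j k l : 'I_d) : (j < k)%N -> l != j -> l != k ->
  exists f : 'I_3 -> 'I_d, (forall i i' : 'I_3, (i < i')%N -> (f i < f i')%N) /\
    forall P : 'I_d -> Prop, P j -> P k -> P l -> forall i, P (f i).
Proof.
move=> jk lj lk.
have lj' : val l != val j by [].
have lk' : val l != val k by [].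
have [lt1|gt1] := ltnP l j.
  exists (mk3 l j k); split; first by apply: mk3_sorted.
  by move=> P pj pk pl; apply: mk3P.
have [lt2|gt2] := ltnP l k.
  exists (mk3 j l k); split; first by apply: mk3_sorted => //; rewrite ltn_neqAle eq_sym lj' gt1.
  by move=> P pj pk pl; apply: mk3P.
exists (mk3 j k l); split; first by apply: mk3_sorted => //; rewrite ltn_neqAle eq_sym lk' gt2.
by move=> P pj pk pl; apply: mk3P.
Qed.
End H.

Theorem lemma6p3 (R : realType) (d : nat) (v : 'I_d -> 'rV[R]_d) (b : 'I_d -> R) :
  (3 <= d)%N ->
  injective v ->
  (forall j, dotv (v j) (v j) = 1) ->
  rank_cond v b 2 -> rank_cond v b 3 -> rank_cond v b 4 ->
  forall j k j' k' : 'I_d,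
    (j < k)%N -> (j' < k')%N ->
    has_affdim (Fac v b j) d.-1 -> is_facet_of (Fac2 v b j k) (Fac v b j) ->
    has_affdim (Fac v b j') d.-1 -> is_facet_of (Fac2 v b j' k') (Fac v b j') ->
    ~ (j = j' /\ k = k') ->
    forall z, ~ (Sset v b j k z /\ Sset v b j' k' z).
Proof.
move=> d3 _ _ _ rc3 _ j k j' k' jk jk' affj [_ [n [affjn affjkn]]] _ _ neq z
  [[y [s [t [ry [s0 [t0 Ez]]]]]] [y' [s' [t' [ry' [s0' [t0' Ez']]]]]]].
have yy : y = y'.
  apply: (proj_eq ry.1 ry'.1 (ltW s0) (ltW t0) (ltW s0') (ltW t0')).
  by rewrite -Ez -Ez'.
have [l [ll [lj lk]]] : exists l, (l = j' \/ l = k') /\ l != j /\ l != k.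
  have [hj|hj] := boolP ((j' != j) && (j' != k)).
    by exists j'; move/andP: hj => [? ?]; auto.
  have [hk|hk] := boolP ((k' != j) && (k' != k)).
    by exists k'; move/andP: hk => [? ?]; auto.
  exfalso; move: hj hk; rewrite negb_and !negbK negb_and !negbK.
  case/orP => /eqP ej; case/orP => /eqP ek; subst j' k'.
  - by rewrite ltnn in jk'.
  - by apply: neq.
  - by move: (ltn_trans jk jk'); rewrite ltnn.
  - by rewrite ltnn in jk'.
have Hyl : dotv y (v l) = b l.
  rewrite yy; case: ry' => [[[_ H1] [_ H2]] _]; by case: ll => ->.
have face := relint_face ry Hyl.
have dn : (d.-1 <= n.+1)%N.
  rewrite leqNgt; apply/negP => lt.
  apply: affjn.2; exact: (affdim_sub affj.1 lt).
case: affjkn => [[p [Fp ip]] _].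
have [f [fs fP]] := sort3 jk lj lk.
have Hy : forall i, dotv y (v (f i)) = b (f i).
  by apply: (fP (fun m => dotv y (v m) = b m)) => //; case: ry => [[[_ ?] [_ ?]] _].
have := @rank3 R d v b f y n (\matrix_(i < n) (p (lift ord0 i) - p ord0)) rc3 fs Hy ip.
suff HD : forall r i, dotv (row r (\matrix_(i < n) (p (lift ord0 i) - p ord0))) (v (f i)) = 0.
  by move=> /(_ HD); lia.
move=> r i; rewrite rowK dotvBl; apply/eqP; rewrite subr_eq0; apply/eqP.
apply: (fP (fun m => dotv (p (lift ord0 r)) (v m) = dotv (p ord0) (v m))).
- by case: (Fp (lift ord0 r)) => [[_ ->] _]; case: (Fp ord0) => [[_ ->] _].
- by case: (Fp (lift ord0 r)) => [_ [_ ->]]; case: (Fp ord0) => [_ [_ ->]].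
- by rewrite !face.
Qed.
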